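(* Let $f(x)$ be an irreducible nonconstant polynomial in $\mathbb{Z}[x]$. Let $b(x) \in \mathbb{Z}[x]$ be an irreducible polynomial, not associate to $f(x)$ in $\mathbb{Z}[x]$, such that there exists an integer $r_b \geq 2$ with $b(x) \mid f(x^{r_b})$ in $\mathbb{Z}[x]$. Then for every $k \in \mathbb{N}$ and every finite sequence $\sigma = (\sigma_1, \ldots, \sigma_k)$ of natural numbers greater than one with $\prod_{i=1}^k \sigma_i = r_b$, there exists a splitting sequence $F = (f_n(x))_{n \in \mathbb{N}_0}$ of $f(x)$ whose exponent sequence begins with $\sigma_1, \ldots, \sigma_k$ and such that $f_k(x) = b(x)$.
   Context: Let $f(x)$ be an irreducible polynomial in $\mathbb{Z}[x]$ and let $(e_n)_{n \in \mathbb{N}}$ be a sequence of positive integers (the exponent sequence; only finitely many of its terms may be specified, in which case only the corresponding finitely many terms of the sequence below matter). A splitting sequence of $f(x)$ with this exponent sequence is a sequence $F = (f_n(x))_{n \in \mathbb{N}_0}$ of irreducible polynomials in $\mathbb{Z}[x]$ with $f_0(x) = f(x)$ and, for each $k \geq 1$, $f_k(x)$ an (arbitrarily chosen) irreducible divisor in $\mathbb{Z}[x]$ of $f_{k-1}(x^{e_k})$. *)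

(* Defs.v *)
From HB Require Import structures.
From mathcomp Require Import all_boot all_order all_algebra.
Set Implicit Arguments. Unset Strict Implicit. Unset Printing Implicit Defensive.
Import GRing.Theory.
Local Open Scope ring_scope.

(* Divisibility in the ring Z[x] (NOT mathcomp's %|, which is divisibility
   after pseudo-division, i.e. in Q[x]). *)
Definition dvdZx (a b : {poly int}) : Prop := exists q : {poly int}, b = q * a.

Definition irreducibleZx (p : {poly int}) : Prop :=
  p != 0 /\ p \isn't a GRing.unit /\
  forall q r : {poly int}, p = q * r -> q \is a GRing.unit \/ r \is a GRing.unit.

Definition associateZx (a b : {poly int}) : Prop :=
  exists u : {poly int}, u \is a GRing.unit /\ a = u * b.

(* F is a splitting sequence of f with exponent sequence e
   (e is indexed from 1; e 0 is unused). *)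
Definition splitting_seq (f : {poly int}) (e : nat -> nat) (F : nat -> {poly int}) : Prop :=
  (forall n, (0 < n)%N -> (0 < e n)%N) /\
  F 0%N = f /\
  forall n, irreducibleZx (F n) /\
    dvdZx (F n.+1) ((F n) \Po 'X^(e n.+1)).

(* Main.v *)
Require Import Defs.
From HB Require Import structures.
From mathcomp Require Import all_boot all_order all_algebra.
From Stdlib Require Import Classical.
From mathcomp Require Import zify.
Import GRing.Theory Num.Theory.
Local Open Scope ring_scope.

Lemma unit_size (p : {poly int}) : p \is a GRing.unit -> size p = 1%N.
Proof. by rewrite poly_unitE => /andP[/eqP]. Qed.

Lemma polyC_unit (c : int) : (c%:P \is a GRing.unit) = (c \is a GRing.unit).
Proof.
rewrite poly_unitE size_polyC coefC /=.
by case: (eqVneq c 0) => [->|nz]; rewrite ?unitr0 ?andbF.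
Qed.

Lemma dvdZx_trans a b c : dvdZx a b -> dvdZx b c -> dvdZx a c.
Proof. by move=> [q ->] [r ->]; exists (r * q); rewrite mulrA. Qed.

Lemma dvdZx_refl a : dvdZx a a.
Proof. by exists 1; rewrite mul1r. Qed.

Lemma dvdZx_mul a b c : dvdZx a b -> dvdZx a (c * b).
Proof. by move=> [q ->]; exists (c * q); rewrite mulrA. Qed.

Lemma zcont_unit (b : {poly int}) :
  irreducibleZx b -> (1 < size b)%N -> zcontents b \is a GRing.unit.
Proof.
move=> [b0 [bu bi]] sb.
have := bi _ _ (etrans (zpolyEprim b) (esym (mul_polyC _ _))).
rewrite polyC_unit => -[//|/unit_size].
by rewrite size_zprimitive => E; rewrite E in sb.
Qed.

Lemma dvdp_dvdZx (b x : {poly int}) :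
  irreducibleZx b -> (1 < size b)%N -> b %| x -> dvdZx b x.
Proof.
move=> ib sb /dvdpP_int [r ->].
have cu := zcont_unit _ ib sb.
have cPu : (zcontents b)%:P \is a GRing.unit by rewrite polyC_unit.
have E : zprimitive b = ((zcontents b)%:P)^-1 * b.
  by apply: (canRL (mulKr cPu)); rewrite mul_polyC -zpolyEprim.
by exists (((zcontents b)%:P)^-1 * r); rewrite E mulrAC.
Qed.

Lemma irr_irredp (b : {poly int}) :
  irreducibleZx b -> (1 < size b)%N -> irreducible_poly b.
Proof.
move=> ib sb; split=> // q sq qb; have [r Eb] := dvdpP_int qb.
have [b0 [bu bi]] := ib.
have [/unit_size|ru] := bi _ _ Eb.
  by rewrite size_zprimitive => /eqP; rewrite (negPf sq).
rewrite /eqp qb /=.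
have E : zprimitive q = b * r^-1 by rewrite Eb mulrK.
rewrite (dvdp_trans (_ : b %| zprimitive q)) //.
  by rewrite E dvdp_mulr.
by rewrite {2}[q]zpolyEprim -mul_polyC dvdp_mull.
Qed.

Lemma prime_irr (b g h : {poly int}) :
  irreducibleZx b -> (1 < size b)%N -> dvdZx b (g * h) -> dvdZx b g \/ dvdZx b h.
Proof.
move=> ib sb [q Eq].
have bgh : b %| g * h by rewrite Eq dvdp_mull.
have ip := irr_irredp _ ib sb.
have [cop|ncop] := boolP (coprimep b g).
  by right; apply: dvdp_dvdZx => //; rewrite -(Gauss_dvdpl _ cop) mulrC.
left; apply: dvdp_dvdZx => //.
have := ip (gcdp b g); rewrite -coprimep_def => /(_ ncop (dvdp_gcdl _ _)) E.
by rewrite -(eqp_dvdl _ E) dvdp_gcdr.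
Qed.

Lemma nonconst_b (f b : {poly int}) (r : nat) :
  irreducibleZx f -> (1 < size f)%N -> irreducibleZx b -> (0 < r)%N ->
  dvdZx b (f \Po 'X^r) -> (1 < size b)%N.
Proof.
move=> [f0 [fu fi]] sf [b0 [bu bi]] r0 [q Eq].
rewrite ltnNge; apply/negP => sb.
have Eb := size1_polyC sb; set c := b`_0 in Eb.
have fc : f \is a polyOver (dvdz c).
  apply/polyOverP => i.
  have := congr1 (fun p : {poly int} => p`_(i * r)%N) Eq.
  rewrite /= coef_comp_poly_Xn // dvdn_mull // mulnK // => ->.
  by rewrite Eb coefMC dvdz_mull.
have [f' Ef] := polyOver_dvdzP _ _ fc.
have [] := fi _ _ (etrans Ef (esym (mul_polyC _ _))).
  by rewrite -Eb => H; move: bu; rewrite H.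
move/unit_size => sf'; move: sf; rewrite Ef.
by move=> H; have := leq_trans H (size_scale_leq c f'); rewrite sf'.
Qed.

Lemma lex_ind (P : {poly int} -> Prop) :
  (forall g : {poly int}, (forall q : {poly int}, (size q < size g)%N \/
      (size q = size g /\ (`|lead_coef q| < `|lead_coef g|)%N) -> P q) -> P g) ->
  forall g, P g.
Proof.
move=> H.
suff: forall n (g : {poly int}), (size g <= n)%N -> P g by move=> S g; exact: (S _ g (leqnn _)).
elim=> [|n IHn] g.
  rewrite leqn0 size_poly_eq0 => /eqP ->; apply: H => q [|[]].
    by rewrite size_poly0.
  by move=> _; rewrite lead_coef0.
move=> sg.
suff: forall k (g : {poly int}), (size g <= n.+1)%N -> (`|lead_coef g| <= k)%N -> P g.
  by move=> S; exact: (S _ g sg (leqnn _)).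
elim=> [|k IHk] {}g {}sg.
  rewrite leqn0 => lg; apply: H => q [|[]].
    by move=> sq; apply: IHn; rewrite -ltnS (leq_trans sq).
  by rewrite (eqP lg).
move=> lg; apply: H => q [|[]].
  by move=> sq; apply: IHn; rewrite -ltnS (leq_trans sq).
move=> sq lq; apply: IHk; first by rewrite sq.
by rewrite -ltnS (leq_trans lq).
Qed.

Lemma nonunit_abs (c : int) : c != 0 -> c \isn't a GRing.unit -> (1 < `|c|)%N.
Proof. by case: c => [[|[|n]]|[|n]]. Qed.

Lemma measure_lt (q r : {poly int}) : q != 0 -> r != 0 -> r \isn't a GRing.unit ->
  (size q < size (q * r)%R)%N \/
  (size q = size (q * r)%R /\ (`|lead_coef q| < `|lead_coef (q * r)%R|)%N).
Proof.
move=> q0 r0 ru.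
rewrite size_mul // lead_coefM abszM.
have sr : (0 < size r)%N by rewrite size_poly_gt0.
have sq : (0 < size q)%N by rewrite size_poly_gt0.
have [sr1|sr1] := eqVneq (size r) 1%N.
  right; split; first by rewrite sr1 addn1.
  have Er : r = (r`_0)%:P by apply: size1_polyC; rewrite sr1.
  rewrite Er lead_coefC; apply: ltn_Pmulr.
    apply: nonunit_abs; first by rewrite -polyC_eq0 -Er.
    by rewrite -polyC_unit -Er.
  by rewrite absz_gt0 lead_coef_eq0.
left; have sr2 : (1 < size r)%N by rewrite ltn_neqAle eq_sym sr1.
move: sr2 sq; set a := size q; set b := size r; move=> *. lia.
Qed.

Lemma descent (b : {poly int}) (m : nat) : irreducibleZx b -> (1 < size b)%N ->
  forall g, g != 0 -> dvdZx b (g \Po 'X^m) ->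
  exists p, irreducibleZx p /\ dvdZx p g /\ dvdZx b (p \Po 'X^m).
Proof.
move=> ib sb; apply: lex_ind => g IH g0 bg.
have [gi|ngi] := classic (irreducibleZx g).
  by exists g; split=> //; split => //; exact: dvdZx_refl.
have bu := ib.2.1.
have [gu|gnu] := boolP (g \is a GRing.unit).
  exfalso; have Eg : g = (g`_0)%:P by apply: size1_polyC; rewrite unit_size.
  move: bg; rewrite Eg comp_polyC => -[q Eq].
  have : q * b \is a GRing.unit by rewrite -Eq polyC_unit -polyC_unit -Eg.
  by rewrite unitrM => /andP[_ H]; move: bu; rewrite H.
have : exists q r, g = q * r /\ q \isn't a GRing.unit /\ r \isn't a GRing.unit.
  apply: NNPP => H; apply: ngi; split=> //; split=> // q r E.
  apply: NNPP => H2; apply: H; exists q, r; split=> //.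
  by split; apply/negP => K; apply: H2; [left|right].
move=> [q [r [Eg [qu ru]]]].
have q0 : q != 0 by apply: contraNneq g0 => q0; rewrite Eg q0 mul0r.
have r0 : r != 0 by apply: contraNneq g0 => r0; rewrite Eg r0 mulr0.
have key : forall q' r', g = q' * r' -> q' != 0 -> r' != 0 ->
    r' \isn't a GRing.unit -> dvdZx b (q' \Po 'X^m) ->
    exists p, irreducibleZx p /\ dvdZx p g /\ dvdZx b (p \Po 'X^m).
  move=> q' r' E q'0 r'0 r'u bq.
  have [p [pi [pq bp]]] := IH q' (ltac:(rewrite E; exact: measure_lt)) q'0 bq.
  exists p; split=> //; split=> //; rewrite E; apply: dvdZx_trans pq _.
  by exists r'; rewrite mulrC.
move: bg; rewrite {1}Eg comp_polyM => /(prime_irr _ _ _ ib sb) [bq|br].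
  exact: key Eg q0 r0 ru bq.
by apply: key (_ : g = r * q) r0 q0 qu br; rewrite mulrC.
Qed.

Fixpoint chain (b h : {poly int}) (sigma : seq nat) (Fs : seq {poly int}) : Prop :=
  match sigma, Fs with
  | [::], [::] => h = b
  | s :: sr, p :: pr => irreducibleZx p /\ dvdZx p (h \Po 'X^s) /\ chain b p sr pr
  | _, _ => False
  end.

Lemma chain_exists (b : {poly int}) : irreducibleZx b -> (1 < size b)%N ->
  forall (sigma : seq nat) (h : {poly int}), sigma != [::] ->
  all (fun s => 0 < s)%N sigma ->
  dvdZx b (h \Po 'X^(\prod_(s <- sigma) s)) -> h != 0 ->
  exists Fs, chain b h sigma Fs.
Proof.
move=> ib sb; elim => [//|s sr IH] h _ /andP[s0 as_] bh h0.
case: sr IH as_ bh => [|s' sr'] IH as_ bh.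
  exists [:: b]; split=> //; split=> //.
  by move: bh; rewrite big_seq1.
move: bh; rewrite big_cons; set m := \prod_(i <- s' :: sr') i => bh.
have Eh : h \Po 'X^(s * m) = (h \Po 'X^s) \Po 'X^m.
  by rewrite -comp_polyA comp_Xn_poly -exprM mulnC.
have g0 : h \Po 'X^s != 0 by rewrite comp_poly_eq0 // size_polyXn ltnS.
rewrite Eh in bh.
have [p [pi [pg bp]]] := descent b m ib sb _ g0 bh.
have [Fs ch] := IH p isT as_ bp pi.1.
by exists (p :: Fs).
Qed.

Lemma chain_props (b : {poly int}) (sigma : seq nat) : forall h Fs,
  chain b h sigma Fs -> irreducibleZx b -> irreducibleZx h ->
  (forall n, irreducibleZx (nth b (h :: Fs) n)) /\
  (forall n, (n < size sigma)%N ->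
     dvdZx (nth b (h :: Fs) n.+1) (nth b (h :: Fs) n \Po 'X^(nth 0%N sigma n))) /\
  (forall n, (size sigma <= n)%N -> nth b (h :: Fs) n = b).
Proof.
elim: sigma => [|s sr IH] h [|p pr] //=.
  move=> -> ib _; split; first by case=> [|n] //=; rewrite nth_nil.
  by split=> // [[|n]] //= _; rewrite nth_nil.
move=> [pi [ph ch]] ib hi.
have [I1 [I2 I3]] := IH p pr ch ib pi.
split; first by case.
split; first by case=> [|n] //= ; rewrite ltnS => /I2.
by case=> [|n] //=; rewrite ltnS => /I3.
Qed.

Theorem lemma3p5 (f b : {poly int}) (r : nat) :
  irreducibleZx f -> (1 < size f)%N ->
  irreducibleZx b -> ~ associateZx b f ->
  (2 <= r)%N -> dvdZx b (f \Po 'X^r) ->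
  forall sigma : seq nat,
    all (fun s => 1 < s)%N sigma ->
    (\prod_(s <- sigma) s)%N = r ->
    exists (e : nat -> nat) (F : nat -> {poly int}),
      splitting_seq f e F /\
      (forall i, (1 <= i <= size sigma)%N -> e i = nth 0%N sigma i.-1) /\
      F (size sigma) = b.
Proof.
move=> fi sf bi _ r2 bdiv sigma sall sprod.
have r0 : (0 < r)%N by apply: leq_trans r2.
have sb := nonconst_b f b r fi sf bi r0 bdiv.
have sig0 : sigma != [::].
  by apply/eqP => E; move: sprod r2; rewrite E big_nil => <-.
have sall0 : all (fun s => 0 < s)%N sigma.
  by apply: sub_all sall => s /ltnW.
have [Fs ch] := chain_exists b bi sb sigma f sig0 sall0
   (ltac:(by rewrite sprod)) fi.1.
have [Hirr [Hdvd Hb]] := chain_props b sigma f Fs ch bi fi.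
exists (fun n => if (1 <= n <= size sigma)%N then nth 0%N sigma n.-1 else 1%N).
exists (fun n => nth b (f :: Fs) n).
split; last first.
  split; last by apply: Hb.
  by move=> i ->.
split.
  move=> n n0; case: ifP => // /andP[_ nle].
  apply: ltnW; apply: (all_nthP 0%N sall).
  by case: n n0 nle.
split=> // n; split=> //.
have [lt|ge] := ltnP n (size sigma).
  by rewrite /=; apply: Hdvd.
have E1 := Hb n.+1 (leq_trans ge (leqnSn _)); have E0 := Hb n ge.
simpl in E1; rewrite /= E1 E0 expr1 comp_polyXr.
exact: dvdZx_refl.
Qed.
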